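(* Let $(\lambda_n)_{n\ge0}$ be an increasing sequence of non-negative real numbers tending to infinity and let $(c_n)_{n\ge0}$ be complex numbers. Then $$\sum_{\lambda_n\le x}\lambda_n|c_n|=O(x)\quad(x\to\infty)$$ holds if and only if $$\sum_{x\le\lambda_n}\frac{|c_n|}{\lambda_n}=O\!\left(\frac1x\right)\quad(x\to\infty).$$ *)

(* Defs.v *)
From HB Require Import structures.
From mathcomp Require Import all_boot all_order all_algebra.
From mathcomp Require Import all_classical all_reals all_analysis.
From mathcomp Require Import complex.
Set Implicit Arguments. Unset Strict Implicit. Unset Printing Implicit Defensive.
Import Order.TTheory GRing.Theory Num.Theory.
Local Open Scope ring_scope.

(* modulus |z| = sqrt (Re z ^ 2 + Im z ^ 2) of a complex number z : R[i] *)
Definition cmod (R : realType) (z : R[i]) : R := ComplexField.Normc.normc z.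

(* Main.v *)
Require Import Defs.
From HB Require Import structures.
From mathcomp Require Import all_boot all_order all_algebra.
From mathcomp Require Import all_classical all_reals all_analysis.
From mathcomp Require Import complex zify ring lra.
Import Order.TTheory GRing.Theory Num.Theory.
Local Open Scope ring_scope.
Local Open Scope classical_set_scope.
Local Open Scope ereal_scope.


Section Helpers.
Local Open Scope ring_scope.
Local Close Scope classical_set_scope.
Local Close Scope ereal_scope.
Lemma sum_low (R : realType) (f : nat -> R) k M :
  \sum_(k <= n < M) f n = \sum_(0 <= n < M) (if (k <= n)%N then f n else 0).
Proof.
case: (leqP k M) => hk.
  rewrite [RHS](big_cat_nat (leq0n k) hk) /=.
  have -> : \sum_(0 <= i < k) (if (k <= i)%N then f i else 0) = 0.
    rewrite big_nat_cond big1 // => i /andP[/andP[_ ik] _].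
    by rewrite leqNgt ik.
  rewrite add0r; apply: eq_big_nat => i /andP[-> _] //.
rewrite big_geq ?(ltnW hk) // big_nat_cond big1 // => i /andP[/andP[_ iM] _].
by rewrite ifN // -ltnNge (leq_trans iM (ltnW hk)).
Qed.

Lemma sum_up (R : realType) (f : nat -> R) M N : (forall n, 0 <= f n) ->
  \sum_(0 <= n < N) (if (n < M)%N then f n else 0) <= \sum_(0 <= n < M) f n.
Proof.
move=> f0; case: (leqP N M) => hN.
  rewrite [X in _ <= X](big_cat_nat (leq0n N) hN) /= -[X in X <= _]addr0 lerD //; last first.
    by rewrite big_nat_cond sumr_ge0.
  rewrite le_eqVlt; apply/orP; left; apply/eqP.
  by apply: eq_big_nat => i /andP[_ iN]; rewrite (leq_trans iN hN).
rewrite [X in X <= _](big_cat_nat (leq0n M) (ltnW hN)) /= [X in _ + X]big_nat_cond [X in _ + X]big1 ?addr0.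
  rewrite le_eqVlt; apply/orP; left; apply/eqP.
  by apply: eq_big_nat => i /andP[_ ->].
by move=> i /andP[/andP[]]; rewrite leqNgt => /negbTE ->.
Qed.

Lemma step1 (R : realType) (P C u v : R) :
  0 <= P -> P * u <= C -> 0 < v -> v < u -> P * (u^+2 - v^+2) <= 2 * C * (u - v).
Proof.
move=> P0 Pu v0 vu.
have h1 : 0 <= (C - P * u) * (u - v) by apply: mulr_ge0; lra.
have h2 : P * v <= P * u by apply: ler_wpM2l => //; lra.
have h3 : 0 <= (C - P * v) * (u - v) by apply: mulr_ge0; lra.
nra.
Qed.

Lemma step2 (R : realType) (Rr C L L' : R) :
  0 <= Rr -> Rr * L' <= C -> 0 < L -> L < L' -> (L'^+2 - L^+2) * Rr <= 2 * C * (L' - L).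
Proof.
move=> R0 RL L0 LL.
have h2 : Rr * L <= Rr * L' by apply: ler_wpM2l => //; lra.
have h1 : 0 <= (C - Rr * L') * (L' - L) by apply: mulr_ge0; lra.
have h3 : 0 <= (C - Rr * L) * (L' - L) by apply: mulr_ge0; lra.
nra.
Qed.

Arguments step1 {R P C u v}.
Arguments step2 {R Rr C L L'}.

Lemma inv_le (R : realType) (x y : R) : 0 < x -> x <= y -> y^-1 <= x^-1.
Proof. by move=> x0 xy; rewrite lef_pV2 // posrE (lt_le_trans x0 xy). Qed.

Lemma inv_lt (R : realType) (x y : R) : 0 < x -> x < y -> y^-1 < x^-1.
Proof. by move=> x0 xy; rewrite ltf_pV2 // posrE (lt_trans x0 xy). Qed.

Arguments inv_le {R x y}.
Arguments inv_lt {R x y}.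

Lemma fwd_core (R : realType) (lam a : nat -> R) (C : R) m :
 (forall n, 0 <= a n) -> {homo lam : i j / (i < j)%N >-> i < j} -> 0 < lam m -> 0 <= C ->
 (forall k, (m <= k)%N -> \sum_(m <= n < k.+1) lam n * a n <= C * lam k) ->
 forall j, \sum_(m <= n < (m+j)%N.+1) a n / lam n <= 3 * C / lam m.
Proof.
move=> a0 hl lm0 C0 HP.
have lmono : forall i j, (i <= j)%N -> lam i <= lam j.
  by move=> i j ij; apply: (ltW_homo hl).
have lpos : forall n, (m <= n)%N -> 0 < lam n.
  by move=> n mn; apply: lt_le_trans lm0 (lmono _ _ mn).
have inv : forall j, \sum_(m <= n < (m+j)%N.+1) a n / lam n <=
   (\sum_(m <= n < (m+j)%N.+1) lam n * a n) * (lam (m+j)%N)^-1 ^+ 2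
   + 2 * C * ((lam m)^-1 - (lam (m+j)%N)^-1).
  elim=> [|j IH].
    rewrite !addn0 !big_nat1 subrr mulr0 addr0.
    rewrite le_eqVlt; apply/orP; left; apply/eqP; field.
    by rewrite lt0r_neq0.
  have mk : (m <= (m + j)%N.+1)%N by apply: leqW; apply: leq_addr.
  rewrite addnS (big_nat_recr _ _ _ mk) (big_nat_recr _ _ _ mk).
  set T := \sum_(m <= n < (m+j)%N.+1) a n / lam n in IH *.
  set P := \sum_(m <= n < (m+j)%N.+1) lam n * a n in IH *.
  have lk := lpos _ mk.
  have lj := lpos (m + j)%N (leq_addr _ _).
  have ljk : lam (m + j)%N < lam (m + j)%N.+1 by apply: hl.
  have P0 : 0 <= P.
    rewrite /P big_nat_cond; apply: sumr_ge0 => i /andP[/andP[mi _] _].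
    by rewrite mulr_ge0 // ltW // lpos.
  have Pu : P * (lam (m+j)%N)^-1 <= C.
    have := HP (m + j)%N (leq_addr _ _); rewrite -/P => h.
    have : P * (lam (m+j)%N)^-1 <= C * lam (m+j)%N * (lam (m+j)%N)^-1.
      by apply: ler_wpM2r => //; rewrite invr_ge0 ltW.
    by rewrite -mulrA mulfV ?mulr1 // lt0r_neq0.
  have hv : 0 < (lam (m + j).+1)^-1 by rewrite invr_gt0.
  have s1 := step1 P0 Pu hv (inv_lt lj ljk).
  have e1 : a (m + j)%N.+1 / lam (m + j)%N.+1 =
     lam (m + j)%N.+1 * a (m + j)%N.+1 * (lam (m + j)%N.+1)^-1 ^+ 2.
    by field; rewrite lt0r_neq0.
  rewrite e1.
  move: s1 IH; set u := (lam (m + j)%N)^-1; set v := (lam (m + j).+1)^-1; set w := (lam m)^-1.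
  set b := lam (m + j).+1 * a (m + j).+1.
  rewrite /=; lra.
move=> j; apply: le_trans (inv j) _.
set P := \sum_(m <= n < (m+j)%N.+1) lam n * a n.
have lj := lpos (m + j)%N (leq_addr _ _).
have uu : (lam (m+j)%N)^-1 <= (lam m)^-1 by apply: inv_le => //; apply: lmono; apply: leq_addr.
have Pu : P * (lam (m+j)%N)^-1 <= C.
  have := HP (m + j)%N (leq_addr _ _); rewrite -/P => h.
  have : P * (lam (m+j)%N)^-1 <= C * lam (m+j)%N * (lam (m+j)%N)^-1.
    by apply: ler_wpM2r => //; rewrite invr_ge0 ltW.
  by rewrite -mulrA mulfV ?mulr1 // lt0r_neq0.
have u0 : 0 <= (lam (m+j)%N)^-1 by rewrite invr_ge0 ltW.
have h : P * (lam (m+j)%N)^-1 ^+ 2 <= C * (lam (m+j)%N)^-1.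
  by rewrite expr2 mulrA ler_wpM2r.
rewrite -mulrA; nra.
Qed.

Lemma bwd_core (R : realType) (lam a : nat -> R) (C : R) k0 K :
 (forall n, 0 <= a n) -> {homo lam : i j / (i < j)%N >-> i < j} -> 0 < lam k0 -> 0 <= C ->
 (k0 <= K)%N ->
 (forall k, (k0 <= k)%N -> \sum_(k <= n < K.+1) a n / lam n <= C / lam k) ->
 \sum_(k0 <= n < K.+1) lam n * a n <= C * lam k0 + 2 * C * lam K.
Proof.
move=> a0 hl lm0 C0 k0K HR.
have lmono : forall i j, (i <= j)%N -> lam i <= lam j.
  by move=> i j ij; apply: (ltW_homo hl).
have lpos : forall n, (k0 <= n)%N -> 0 < lam n.
  by move=> n mn; apply: lt_le_trans lm0 (lmono _ _ mn).
have Rge0 : forall k, (k0 <= k)%N -> 0 <= \sum_(k <= n < K.+1) a n / lam n.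
  move=> k kk; rewrite big_nat_cond; apply: sumr_ge0 => i /andP[/andP[ki _] _].
  by rewrite divr_ge0 // (le_trans (ltW lm0)) // lmono // (leq_trans kk ki).
have RL : forall k, (k0 <= k)%N -> (\sum_(k <= n < K.+1) a n / lam n) * lam k <= C.
  move=> k kk; have lk := lpos _ kk.
  have : (\sum_(k <= n < K.+1) a n / lam n) * lam k <= C / lam k * lam k.
    by apply: ler_wpM2r; [exact: ltW | exact: HR].
  by rewrite mulfVK // lt0r_neq0.
have inv : forall d k, (K - k)%N = d -> (k0 <= k)%N -> (k <= K)%N ->
   \sum_(k <= n < K.+1) lam n * a n <=
   lam k ^+ 2 * (\sum_(k <= n < K.+1) a n / lam n) + 2 * C * (lam K - lam k).
  elim=> [|d IH] k hd kk kK.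
    have -> : k = K by apply/eqP; rewrite eqn_leq kK /= -subn_eq0 hd.
    rewrite !big_nat1 subrr mulr0 addr0.
    rewrite le_eqVlt; apply/orP; left; apply/eqP; field.
    by rewrite lt0r_neq0 // lpos.
  have kK' : (k < K)%N by rewrite -subn_gt0 hd.
  have kK1 : (k < K.+1)%N by apply: ltnW.
  rewrite !(big_ltn kK1).
  have := IH k.+1 ltac:(lia) ltac:(lia) kK'.
  have := RL k.+1 ltac:(lia).
  have := Rge0 k.+1 ltac:(lia).
  have lk := lpos _ kk.
  have lk1 : lam k < lam k.+1 by apply: hl.
  move: (\sum_(k.+1 <= n < K.+1) a n / lam n) => Rr.
  move: (\sum_(k.+1 <= n < K.+1) lam n * a n) => U.
  move=> R0 RL1 IH1.
  have s2 := step2 R0 RL1 lk lk1.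
  have e : lam k ^+ 2 * (a k / lam k) = lam k * a k by field; rewrite lt0r_neq0.
  rewrite /= mulrDr e; lra.
have := inv (K - k0)%N k0 erefl (leqnn _) k0K.
have h1 := RL k0 (leqnn _).
have h2 := Rge0 k0 (leqnn _).
move: (\sum_(k0 <= n < K.+1) a n / lam n) h1 h2 => Rr h1 h2.
have h3 : lam k0 ^+ 2 * Rr <= C * lam k0.
  nra.
have lK : 0 <= C * lam k0 by rewrite mulr_ge0 // ltW.
lra.
Qed.

End Helpers.

Arguments inv_le {R x y}.
Arguments inv_lt {R x y}.
Arguments fwd_core {R lam a C m}.
Arguments bwd_core {R lam a C k0 K}.

Lemma ser_le (R : realType) (b : nat -> bool) (f : nat -> R) (B : R) :
  (forall n, (0 <= f n)%R) ->
  (forall N, (\sum_(0 <= n < N) (if b n then f n else 0) <= B)%R) ->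
  \sum_(0 <= n <oo) (if b n then (f n)%:E else 0) <= B%:E.
Proof.
move=> f0 HB.
apply: lime_le.
  by apply: is_cvg_nneseries => n _ _; case: (b n) => //; rewrite lee_fin.
apply: nearW => N.
have -> : \sum_(0 <= n < N) (if b n then (f n)%:E else 0) =
          \sum_(0 <= n < N) (if b n then f n else 0%R)%:E.
  by apply: eq_bigr => i _; case: (b i).
by rewrite sumEFin lee_fin.
Qed.

Lemma ser_ge (R : realType) (b : nat -> bool) (f : nat -> R) N :
  (forall n, (0 <= f n)%R) ->
  (\sum_(0 <= n < N) (if b n then f n else 0%R))%:E <=
  \sum_(0 <= n <oo) (if b n then (f n)%:E else 0).
Proof.
move=> f0; rewrite -sumEFin.
have -> : \sum_(0 <= n < N) (if b n then f n else 0%R)%:E =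
          \sum_(0 <= n < N) (if b n then (f n)%:E else 0).
  by apply: eq_bigr => i _; case: (b i).
by apply: nneseries_lim_ge => n _ _; case: (b n) => //; rewrite lee_fin.
Qed.

Lemma cmod_ge0 (R : realType) (z : R[i]) : (0 <= cmod z)%R.
Proof. by case: z => a b; rewrite /cmod /= sqrtr_ge0. Qed.

Theorem lemma2p2 (R : realType) (lam : nat -> R) (c : nat -> R[i]) :
  (forall n, (0 <= lam n)%R) ->
  {homo lam : m n / (m < n)%N >-> (m < n)%R} ->
  (lam @ \oo --> +oo)%R ->
  (exists (C x0 : R), forall x : R, (x0 <= x)%R ->
     \sum_(0 <= n <oo) (if (lam n <= x)%R then (lam n * cmod (c n))%:E else 0)
       <= (C * x)%:E)
  <->
  (exists (C x0 : R), forall x : R, (x0 <= x)%R ->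
     \sum_(0 <= n <oo) (if (x <= lam n)%R then (cmod (c n) / lam n)%:E else 0)
       <= (C / x)%:E).
Proof.
move=> lam0 hl hlim.
pose a n := cmod (c n).
have a0 : forall n, (0 <= a n)%R by move=> n; apply: cmod_ge0.
have lmono : forall i j, ((lam i <= lam j) = (i <= j)%N)%R by move=> i j; exact: (le_mono hl).
have exl : forall A : R, exists n, (A <= lam n)%R.
  by move=> A; move/cvgryPge: hlim => /(_ A) [N _ HN]; exists N; apply: HN => /=.
split.
- move=> [C [x0 H]].
  pose C' := Num.max C 0%R.
  have CC' : (C <= C')%R by rewrite le_max lexx.
  have C'0 : (0 <= C')%R by rewrite le_max lexx orbT.
  exists (3 * C')%R, (Num.max x0 1%R) => x hx.
  have x1 : (1 <= x)%R by move: hx; rewrite ge_max => /andP[].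
  have xx0 : (x0 <= x)%R by move: hx; rewrite ge_max => /andP[].
  have xpos : (0 < x)%R by apply: lt_le_trans x1; rewrite ltr01.
  have [m Hm Hmin] := ex_minnP (exl x).
  have lmpos : (0 < lam m)%R by apply: lt_le_trans Hm.
  have HP : forall k, (m <= k)%N ->
      (\sum_(m <= n < k.+1) lam n * a n <= C' * lam k)%R.
    move=> k mk.
    have lk : (x0 <= lam k)%R by rewrite (le_trans xx0) // (le_trans Hm) // lmono.
    have := le_trans (ser_ge _ (fun n => lam n <= lam k)%R (fun n => lam n * a n)%R k.+1 _) (H _ lk).
    rewrite lee_fin => /(_ (fun n => mulr_ge0 (lam0 n) (a0 n))) h.
    rewrite (le_trans _ (ler_wpM2r (lam0 k) CC')) // (le_trans _ h) //.
    rewrite [X in (X <= _)%R]sum_low [X in (X <= _)%R]big_nat_cond [X in (_ <= X)%R]big_nat_cond.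
    apply: ler_sum => i /andP[/andP[_ ik] _].
    have ik' : (i <= k)%N by rewrite -ltnS.
    rewrite lmono ik'.
    by case: (m <= i)%N => //; rewrite mulr_ge0.
  apply: ser_le => [n|N]; first exact: divr_ge0 (a0 n) (lam0 n).
  rewrite (eq_bigr (fun n => if (m <= n)%N then a n / lam n else 0)%R); last first.
    move=> i _; case: ifP => hi.
      by rewrite ifT // Hmin.
    by rewrite ifF //; apply/negbTE; apply: contraFN hi => mi; rewrite (le_trans Hm) // lmono.
  rewrite -sum_low.
  case: (leqP N m) => hN.
    by rewrite big_geq //; apply: divr_ge0; [lra | exact: ltW].
  have -> : N = (m + (N - m.+1)).+1 by lia.
  apply: le_trans (fwd_core a0 hl lmpos C'0 HP (N - m.+1)) _.
  apply: ler_wpM2l; first lra.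
  by apply: inv_le.
- move=> [C [x0 H]].
  pose C' := Num.max C 0%R.
  have CC' : (C <= C')%R by rewrite le_max lexx.
  have C'0 : (0 <= C')%R by rewrite le_max lexx orbT.
  pose X1 := Num.max x0 1%R.
  have [k0 Hk0 Hmin0] := ex_minnP (exl X1).
  have lk0 : (1 <= lam k0)%R by apply: le_trans Hk0; rewrite le_max lexx orbT.
  have lk0pos : (0 < lam k0)%R by apply: lt_le_trans lk0; rewrite ltr01.
  pose Kc := (\sum_(0 <= n < k0) lam n * a n)%R.
  have Kc0 : (0 <= Kc)%R by rewrite /Kc big_nat_cond sumr_ge0 // => i _; rewrite mulr_ge0.
  exists (2 * C' + 1)%R, (Num.max X1 (Kc + C' * lam k0))%R => x hx.
  have xK : (Kc + C' * lam k0 <= x)%R by move: hx; rewrite ge_max => /andP[].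
  have CL0 : (0 <= C' * lam k0)%R by rewrite mulr_ge0 // ltW.
  have x0' : (0 <= x)%R by apply: le_trans xK; apply: addr_ge0.
  have exg : exists n, (x < lam n)%R.
    by have [n hn] := exl (x + 1)%R; exists n; lra.
  have [M HM HminM] := ex_minnP exg.
  have HM' : forall n, (lam n <= x)%R = (n < M)%N.
    move=> n; case: (ltnP n M) => nM.
      apply: contraTT nM; rewrite -ltNge -leqNgt => xn; exact: HminM.
    apply/negbTE; rewrite -ltNge; apply: (lt_le_trans HM).
    by rewrite lmono.
  apply: ser_le => [n|N]; first exact: mulr_ge0 (lam0 n) (a0 n).
  rewrite (eq_bigr (fun n => if (n < M)%N then lam n * a n else 0)%R); last first.
    by move=> i _; rewrite HM'.
  apply: le_trans (sum_up _ _ _ _ (fun n => mulr_ge0 (lam0 n) (a0 n))) _.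
  have Cx0 : (0 <= C' * x)%R by rewrite mulr_ge0.
  case: (leqP M k0) => hM.
    have : (\sum_(0 <= n < M) lam n * a n <= Kc)%R.
      rewrite /Kc (big_cat_nat (leq0n M) hM) /= lerDl.
      by rewrite big_nat_cond sumr_ge0 // => i _; rewrite mulr_ge0.
    lra.
  case: M HM HminM HM' hM => // K HM HminM HM' hK.
  have hK' : (k0 <= K)%N by rewrite -ltnS.
  rewrite (big_cat_nat (leq0n k0) (ltnW hK)) /= -/Kc.
  have HR : forall k, (k0 <= k)%N ->
      (\sum_(k <= n < K.+1) a n / lam n <= C' / lam k)%R.
    move=> k kk.
    have lkk : (lam k0 <= lam k)%R by rewrite lmono.
    have lk : (x0 <= lam k)%R.
      by apply: le_trans lkk; apply: le_trans Hk0; rewrite le_max lexx.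
    have lkpos : (0 < lam k)%R by lra.
    have := le_trans (ser_ge _ (fun n => lam k <= lam n)%R (fun n => a n / lam n)%R K.+1 _) (H _ lk).
    rewrite lee_fin => /(_ (fun n => divr_ge0 (a0 n) (lam0 n))) h.
    have il : (0 <= (lam k)^-1)%R by rewrite invr_ge0 ltW.
    rewrite (le_trans _ (ler_wpM2r il CC')) //.
    apply: le_trans h; rewrite [X in (X <= _)%R]sum_low le_eqVlt; apply/orP; left; apply/eqP.
    by apply: eq_bigr => i _; rewrite lmono.
  have := bwd_core a0 hl lk0pos C'0 hK' HR.
  have lKx : (lam K <= x)%R by rewrite HM'.
  have : (C' * lam K <= C' * x)%R by rewrite ler_wpM2l.
  lra.
Qed.
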